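(* Let $H_0$ be a bounded operator on a Hilbert space with $\|H_0\|=1$, finite-dimensional kernel, and a bounded reflexive generalized inverse $H_0^{(-1)}$; write $\varkappa=\varkappa(H_0,H_0^{(-1)})$. Let $w$ be bounded with $\|w\|=1$ and $0\le\lambda<1/(2\varkappa)$, and assume $\dim\mathrm{Ker}(H_0+\lambda w)=\dim\mathrm{Ker}\,H_0$. Then $$\sin\theta_{\max}(w,\lambda)\le\frac{\lambda\varkappa}{\sqrt{1-2\lambda\varkappa}}.$$ Consequently, if $\dim\mathrm{Ker}(H_0+\lambda w)=\dim\mathrm{Ker}H_0$ for all small $\lambda>0$, then $\limsup_{\lambda\to0^+}\theta_{\max}(w,\lambda)/\lambda\le\varkappa$; in particular the sensitivity satisfies $\mathcal{X}(w)\le\varkappa$ and $\mathcal{X}\le\varkappa$.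
   Context: A reflexive generalized inverse of $H_0$ is $H_0^{(-1)}$ with $H_0^{(-1)}H_0H_0^{(-1)}=H_0^{(-1)}$, $H_0H_0^{(-1)}H_0=H_0$; $\varkappa(H_0,H_0^{(-1)}):=\|H_0\|\|H_0^{(-1)}\|$. For closed subspaces, $P_{\mathcal{V}}$ denotes the orthogonal projector; the maximal angle $\theta_{\max}(w,\lambda)\in[0,\pi/2]$ is defined by $\sin\theta_{\max}(w,\lambda)=\|P_{\mathrm{Ker}(H_0+\lambda w)}-P_{\mathrm{Ker}H_0}\|$. The sensitivity to $w$ is $\mathcal{X}(w):=\frac{d}{d\lambda}\theta_{\max}(w,\lambda)|_{\lambda=0^+}$ (right derivative), and $\mathcal{X}:=\sup_{\|w\|=1}\mathcal{X}(w)$ over perturbations $w$ in a given symmetry class. *)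

(* Defs.v *)
From HB Require Import structures.
From mathcomp Require Import all_boot all_order all_algebra.
From mathcomp Require Import all_classical all_reals all_analysis.
Set Implicit Arguments. Unset Strict Implicit. Unset Printing Implicit Defensive.
Import Order.TTheory GRing.Theory Num.Theory.
Import numFieldNormedType.Exports.
Local Open Scope classical_set_scope.
Local Open Scope ring_scope.

Section HilbertDefs.
Variables (R : realType) (V : completeNormedModType R).

(* [ip] is an inner product on V inducing its norm: V is a real Hilbert space *)
Definition inner_product_of_norm (ip : V -> V -> R) : Prop :=
  [/\ forall x y, ip x y = ip y x,
      forall a x y z, ip (a *: x + y) z = a * ip x z + ip y z
    & forall x, ip x x = `|x| ^+ 2].

Definition lin_op (f : V -> V) : Prop :=
  forall a x y, f (a *: x + y) = a *: f x + f y.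
Definition bounded_op (f : V -> V) : Prop :=
  lin_op f /\ exists M : R, forall x, `|f x| <= M * `|x|.

Definition opnorm (f : V -> V) : R := sup [set `|f x| | x in [set x : V | `|x| <= 1]].

Definition Ker (f : V -> V) : set V := [set x | f x = 0].

Definition has_dim (S : set V) (n : nat) : Prop :=
  exists b : 'I_n -> V,
    (forall c : 'I_n -> R, \sum_(i < n) c i *: b i = 0 -> forall i, c i = 0) /\
    S = [set \sum_(i < n) c i *: b i | c in [set: 'I_n -> R]].

Definition finite_dim (S : set V) : Prop := exists n, has_dim S n.
Definition same_dim (S T : set V) : Prop := exists n, has_dim S n /\ has_dim T n.

Definition orth_proj (ip : V -> V -> R) (S : set V) (P : V -> V) : Prop :=
  (forall x, S (P x)) /\ (forall x y, S y -> ip (x - P x) y = 0).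

Definition refl_ginv (H G : V -> V) : Prop :=
  (forall x, G (H (G x)) = G x) /\ (forall x, H (G (H x)) = H x).

Definition pert (H w : V -> V) (l : R) : V -> V := fun x => H x + l *: w x.

(* theta_max(w, lambda), given the projectors Pf l onto Ker (H0 + l w) *)
Definition theta_max (Pf : R -> V -> V) (l : R) : R :=
  asin (opnorm (fun x => Pf l x - Pf 0 x)).

End HilbertDefs.

(* Main.v *)
Require Import Defs.
From HB Require Import structures.
From mathcomp Require Import all_boot all_order all_algebra.
From mathcomp Require Import all_classical all_reals all_analysis.
From mathcomp Require Import ring lra.
Set Implicit Arguments. Unset Strict Implicit. Unset Printing Implicit Defensive.
Import Order.TTheory GRing.Theory Num.Theory.
Import numFieldNormedType.Exports.
Local Open Scope classical_set_scope.
Local Open Scope ring_scope.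

Lemma ipDl (R : realType) (V : completeNormedModType R) (ip : V -> V -> R) :
  inner_product_of_norm ip -> forall x y z, ip (x + y) z = ip x z + ip y z.
Proof. move=> [_ H _] x y z; by have := H 1 x y z; rewrite scale1r mul1r. Qed.

Lemma ip0l (R : realType) (V : completeNormedModType R) (ip : V -> V -> R) :
  inner_product_of_norm ip -> forall z, ip 0 z = 0.
Proof.
move=> h z; have := ipDl h 0 0 z; rewrite addr0 => H.
by apply/eqP; rewrite -(subrr (ip 0 z)) {2}H addrK.
Qed.

Lemma ipZl (R : realType) (V : completeNormedModType R) (ip : V -> V -> R) :
  inner_product_of_norm ip -> forall a x z, ip (a *: x) z = a * ip x z.
Proof. by move=> h a x z; case: (h) => _ H _; rewrite -[a *: x]addr0 H ip0l // addr0. Qed.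

Lemma ipNl (R : realType) (V : completeNormedModType R) (ip : V -> V -> R) :
  inner_product_of_norm ip -> forall x z, ip (- x) z = - ip x z.
Proof. by move=> h x z; rewrite -scaleN1r ipZl // mulN1r. Qed.

Lemma ipBl (R : realType) (V : completeNormedModType R) (ip : V -> V -> R) :
  inner_product_of_norm ip -> forall x y z, ip (x - y) z = ip x z - ip y z.
Proof. by move=> h x y z; rewrite ipDl // ipNl. Qed.

Lemma ipC (R : realType) (V : completeNormedModType R) (ip : V -> V -> R) :
  inner_product_of_norm ip -> forall x y, ip x y = ip y x.
Proof. by case. Qed.

Lemma ipxx (R : realType) (V : completeNormedModType R) (ip : V -> V -> R) :
  inner_product_of_norm ip -> forall x, ip x x = `|x| ^+ 2.
Proof. by case. Qed.

Lemma normD2 (R : realType) (V : completeNormedModType R) (ip : V -> V -> R) :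
  inner_product_of_norm ip -> forall x y,
  `|x + y| ^+ 2 = `|x| ^+ 2 + 2 * ip x y + `|y| ^+ 2.
Proof.
move=> h x y; rewrite -!(ipxx h) (ipDl h) (ipC h x (x + y)) (ipC h y (x + y)).
rewrite !(ipDl h) (ipC h y x); ring.
Qed.

Lemma normB2 (R : realType) (V : completeNormedModType R) (ip : V -> V -> R) :
  inner_product_of_norm ip -> forall x y,
  `|x - y| ^+ 2 = `|x| ^+ 2 - 2 * ip x y + `|y| ^+ 2.
Proof.
move=> h x y; rewrite (normD2 h) normrN (ipC h x) (ipNl h) (ipC h y) mulrN //.
Qed.

Lemma CS (R : realType) (V : completeNormedModType R) (ip : V -> V -> R) :
  inner_product_of_norm ip -> forall x y, ip x y <= `|x| * `|y|.
Proof.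
move=> h x y.
have [x0|x0] := eqVneq x 0; first by rewrite x0 (ip0l h) normr0 mul0r.
have [y0|y0] := eqVneq y 0; first by rewrite y0 (ipC h) (ip0l h) normr0 mulr0.
have H := sqr_ge0 (`|(`|y| *: x - `|x| *: y)|).
rewrite (normB2 h) !normrZ !normr_id (ipZl h) (ipC h) (ipZl h) (ipC h y) in H.
have px : 0 < `|x| by rewrite normr_gt0.
have py : 0 < `|y| by rewrite normr_gt0.
set p := `|x| * `|y|.
have : p * ip x y <= p * p.
  rewrite -subr_ge0; rewrite -(@pmulr_rge0 _ 2) //.
  rewrite /p; nra.
by rewrite ler_pM2l // /p mulr_gt0.
Qed.

Lemma ip_self0 (R : realType) (V : completeNormedModType R) (ip : V -> V -> R) :
  inner_product_of_norm ip -> forall d, ip d d = 0 -> d = 0.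
Proof.
move=> h d; rewrite (ipxx h) => /eqP; rewrite sqrf_eq0 normr_eq0 => /eqP //.
Qed.

Lemma ipDr (R : realType) (V : completeNormedModType R) (ip : V -> V -> R) :
  inner_product_of_norm ip -> forall x y z, ip z (x + y) = ip z x + ip z y.
Proof. by move=> h x y z; rewrite !(ipC h z) (ipDl h). Qed.
Lemma ipBr (R : realType) (V : completeNormedModType R) (ip : V -> V -> R) :
  inner_product_of_norm ip -> forall x y z, ip z (x - y) = ip z x - ip z y.
Proof. by move=> h x y z; rewrite !(ipC h z) (ipBl h). Qed.
Lemma ipZr (R : realType) (V : completeNormedModType R) (ip : V -> V -> R) :
  inner_product_of_norm ip -> forall a x z, ip z (a *: x) = a * ip z x.
Proof. by move=> h a x z; rewrite !(ipC h z) (ipZl h). Qed.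

Section Lin.
Context (R : realType) (V : completeNormedModType R).

Lemma lin0 (f : V -> V) : lin_op f -> f 0 = 0.
Proof.
move=> hf; have := hf 1 0 0; rewrite !scale1r !addr0 => H.
by apply: (addrI (f 0)); rewrite addr0 -H.
Qed.
Lemma linZ (f : V -> V) : lin_op f -> forall a x, f (a *: x) = a *: f x.
Proof. by move=> hf a x; have := hf a x 0; rewrite addr0 (lin0 hf) addr0. Qed.
Lemma linD (f : V -> V) : lin_op f -> forall x y, f (x + y) = f x + f y.
Proof. by move=> hf x y; have := hf 1 x y; rewrite !scale1r. Qed.
Lemma linN (f : V -> V) : lin_op f -> forall x, f (- x) = - f x.
Proof. by move=> hf x; rewrite -scaleN1r (linZ hf) scaleN1r. Qed.
Lemma linB (f : V -> V) : lin_op f -> forall x y, f (x - y) = f x - f y.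
Proof. by move=> hf x y; rewrite (linD hf) (linN hf). Qed.
Lemma lin_sum (f : V -> V) n (c : 'I_n -> R) (v : 'I_n -> V) : lin_op f ->
  f (\sum_(i < n) c i *: v i) = \sum_(i < n) c i *: f (v i).
Proof.
move=> hf; elim: n c v => [|n IH] c v; first by rewrite !big_ord0 (lin0 hf).
by rewrite !big_ord_recr /= (linD hf) (linZ hf) IH.
Qed.

Definition subsp (S : set V) := S 0 /\ forall a x y, S x -> S y -> S (a *: x + y).

Lemma subspB S : subsp S -> forall x y, S x -> S y -> S (x - y).
Proof. by move=> [_ h] x y Sx Sy; rewrite addrC -scaleN1r; apply: h. Qed.
Lemma subspD S : subsp S -> forall x y, S x -> S y -> S (x + y).
Proof. by move=> [_ h] x y Sx Sy; rewrite -[x]scale1r; apply: h. Qed.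
Lemma subspZ S : subsp S -> forall a x, S x -> S (a *: x).
Proof. by move=> [h0 h] a x Sx; rewrite -[_ *: _]addr0; apply: h. Qed.

Lemma Ker_subsp f : lin_op f -> subsp (Ker f).
Proof.
move=> hf; split; first exact: lin0.
by move=> a x y; rewrite /Ker /= => fx fy; rewrite hf fx fy scaler0 addr0.
Qed.

Lemma opnorm_bound (f : V -> V) : bounded_op f -> forall x, `|f x| <= opnorm f * `|x|.
Proof.
move=> [hf [M hM]] x.
have hub : has_ubound [set `|f x| | x in [set x : V | `|x| <= 1]].
  exists `|M| => _ [y /= hy <-]; apply: (le_trans (hM y)).
  apply: (le_trans (ler_wpM2r (normr_ge0 _) (ler_norm M))).
  by rewrite -[X in _ <= X]mulr1 ler_wpM2l.
have [->|x0] := eqVneq x 0; first by rewrite (lin0 hf) !normr0 mulr0.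
have nx : 0 < `|x| by rewrite normr_gt0.
have H1 : `|f (`|x|^-1 *: x)| <= opnorm f.
  apply: (ub_le_sup hub).
  by exists (`|x|^-1 *: x) => //=; rewrite normrZ normfV normr_id mulVf // gt_eqF.
by move: H1; rewrite (linZ hf) normrZ normfV normr_id mulrC -ler_pdivlMr ?invr_gt0 // invrK.
Qed.

Lemma opnorm_ge0 (f : V -> V) : bounded_op f -> 0 <= opnorm f.
Proof.
move=> [hf [M hM]].
have hub : has_ubound [set `|f x| | x in [set x : V | `|x| <= 1]].
  exists `|M| => _ [y /= hy <-]; apply: (le_trans (hM y)).
  apply: (le_trans (ler_wpM2r (normr_ge0 _) (ler_norm M))).
  by rewrite -[X in _ <= X]mulr1 ler_wpM2l.
have H1 : `|f 0| <= opnorm f.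
  by apply: (ub_le_sup hub); exists 0 => //=; rewrite normr0.
exact: le_trans H1.
Qed.

End Lin.

Section Proj.
Context (R : realType) (V : completeNormedModType R) (ip : V -> V -> R).
Hypothesis h : inner_product_of_norm ip.

Lemma ipP S P : orth_proj ip S P -> forall z d, S d -> ip (P z) d = ip z d.
Proof.
move=> [_ hP] z d Sd; have := hP z d Sd; rewrite (ipBl h) => /eqP.
by rewrite subr_eq0 => /eqP.
Qed.

Lemma proj_id S P : subsp S -> orth_proj ip S P -> forall x, S x -> P x = x.
Proof.
move=> hS hP x Sx; have Sd : S (x - P x) by apply: subspB => //; apply: hP.1.
have := hP.2 x _ Sd => /(ip_self0 h) /eqP; rewrite subr_eq0 => /eqP //.
Qed.

Lemma proj_pyth S P : orth_proj ip S P -> forall x,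
  `|x| ^+ 2 = `|P x| ^+ 2 + `|x - P x| ^+ 2.
Proof.
move=> hP x; rewrite {1}(_ : x = P x + (x - P x)); last by rewrite addrC subrK.
by rewrite (normD2 h (P x)) (ipC h (P x)) (hP.2 x (P x) (hP.1 x)) mulr0 addr0.
Qed.

Lemma proj_best S P : subsp S -> orth_proj ip S P -> forall x k, S k ->
  `|x - P x| ^+ 2 <= `|x - k| ^+ 2.
Proof.
move=> hS hP x k Sk.
have -> : x - k = (x - P x) + (P x - k) by rewrite addrA subrK.
rewrite (normD2 h (x - P x)) hP.2; last by apply: subspB => //; apply: hP.1.
by rewrite mulr0 addr0 lerDl sqr_ge0.
Qed.

Lemma proj_lin S P : subsp S -> orth_proj ip S P -> lin_op P.
Proof.
move=> hS hP a x y.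
set d := P (a *: x + y) - (a *: P x + P y).
have Sd : S d.
  apply: subspB => //; first exact: hP.1.
  by apply: hS.2; apply: hP.1.
suff: d = 0 by move/eqP; rewrite subr_eq0 => /eqP.
apply: (ip_self0 h).
rewrite {1}/d (ipBl h) (ipDl h) (ipZl h) !(ipP hP) //.
rewrite (ipDl h) (ipZl h); lra.
Qed.
End Proj.

Lemma sum_delta (R : realType) (V : completeNormedModType R) n (v : 'I_n -> V) i :
  \sum_(j < n) (j == i)%:R *: v j = v i.
Proof.
rewrite (bigD1 i) //= eqxx scale1r big1 ?addr0 // => j /negbTE ->.
by rewrite scale0r.
Qed.

Lemma surj (R : realType) (V : completeNormedModType R) (T : V -> V)
  (K0 Kl : set V) n : lin_op T -> has_dim K0 n -> has_dim Kl n ->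
  (forall x, Kl x -> K0 (T x)) -> (forall x, Kl x -> T x = 0 -> x = 0) ->
  forall y, K0 y -> exists x, Kl x /\ T x = y.
Proof.
move=> hT [b0 [ind0 E0]] [bl [indl El]] hK hinj y Ky.
have Klbl i : Kl (bl i).
  by rewrite El; exists (fun j => (j == i)%:R) => //; rewrite sum_delta.
have /choice [C HC] : forall i, exists c : 'I_n -> R,
    T (bl i) = \sum_(j < n) c j *: b0 j.
  move=> i; have := hK _ (Klbl i); rewrite E0 => -[c _ <-]; by exists c.
pose M : 'M[R]_n := \matrix_(i, j) C i j.
have key (a : 'rV[R]_n) :
    T (\sum_(i < n) a 0 i *: bl i) = \sum_(j < n) (a *m M) 0 j *: b0 j.
  rewrite lin_sum //.
  under eq_bigr => i _ do rewrite HC scaler_sumr.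
  rewrite exchange_big /=; apply: eq_bigr => j _.
  rewrite mxE scaler_suml; apply: eq_bigr => i _.
  by rewrite scalerA mxE.
have rowinj (a : 'rV[R]_n) : a *m M = 0 -> a = 0.
  move=> aM0.
  have x0 : \sum_(i < n) a 0 i *: bl i = 0.
    apply: hinj; first by rewrite El; exists (fun i => a 0 i).
    rewrite key aM0; apply: big1 => j _; by rewrite mxE scale0r.
  apply/matrixP => i j; rewrite (ord1 i) mxE.
  exact: (indl (fun i => a 0 i) x0 j).
have Mu : M \in unitmx.
  rewrite -row_free_unit -kermx_eq0; apply/eqP/row_matrixP => i; rewrite row0.
  by apply: rowinj; rewrite -row_mul mulmx_ker row0.
move: Ky; rewrite E0 => -[e _ <-].
pose a := (\row_j e j) *m invmx M.
exists (\sum_(i < n) a 0 i *: bl i); split; first by rewrite El; exists (fun i => a 0 i).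
rewrite key /a mulmxKV //; apply: eq_bigr => j _; by rewrite mxE.
Qed.

Lemma key_est (R : realType) (V : completeNormedModType R) (ip : V -> V -> R)
  (h : inner_product_of_norm ip) (K0 Kl : set V) (A B : V -> V) n (d : R) :
  subsp K0 -> subsp Kl -> has_dim K0 n -> has_dim Kl n ->
  orth_proj ip K0 B -> orth_proj ip Kl A -> 0 <= d -> d < 1 ->
  (forall x, Kl x -> `|x - B x| ^+ 2 <= d ^+ 2 * `|x| ^+ 2) ->
  forall z, `|A z - B z| ^+ 2 <= d ^+ 2 / (1 - d ^+ 2) * `|z| ^+ 2.
Proof.
move=> hS0 hSl hd0 hdl hB hA d0 d1 hx z.
have hBl := proj_lin h hS0 hB; have hAl := proj_lin h hSl hA.
have d21 : 0 < 1 - d ^+ 2 by rewrite subr_gt0 expr_lt1.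
set k := d ^+ 2 / (1 - d ^+ 2).
have k0 : 0 <= k by rewrite /k divr_ge0 ?sqr_ge0 ?ltW.
have dk : d ^+ 2 <= k.
  rewrite /k ler_pdivlMr //; have := sqr_ge0 d; have := sqr_ge0 (d ^+ 2); nra.
have stepA : `|A (z - B z)| ^+ 2 <= d ^+ 2 * `|z - B z| ^+ 2.
  set u := z - B z; set p := A u.
  have E1 : `|p| ^+ 2 = ip u p.
    have := hA.2 u p (hA.1 u); rewrite (ipBl h) (ipxx h) => /eqP.
    by rewrite subr_eq0 => /eqP ->.
  have E2 : ip u p = ip u (p - B p).
    by rewrite (ipBr h) (hB.2 z (B p) (hB.1 p)) subr0.
  have C1 := CS h u (p - B p).
  have Q : `|p - B p| ^+ 2 <= d ^+ 2 * `|p| ^+ 2 by apply: hx; apply: hA.1.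
  have Q' : `|p - B p| <= d * `|p|.
    by rewrite -ler_sqr ?nnegrE ?mulr_ge0 ?normr_ge0 // exprMn.
  have P2 : `|p| ^+ 2 <= `|u| * (d * `|p|).
    rewrite E1 E2; apply: (le_trans C1); apply: ler_wpM2l => //.
  have : `|p| <= d * `|u|.
    have [p0|p0] := eqVneq `|p| 0; first by rewrite p0 mulr_ge0.
    have pp : 0 < `|p| by rewrite lt_def p0 normr_ge0.
    rewrite -(ler_pM2r pp); move: P2; rewrite expr2; lra.
  by move=> H; rewrite -exprMn ler_sqr ?nnegrE ?mulr_ge0 ?normr_ge0.
have stepB : forall y, K0 y -> `|y - A y| ^+ 2 <= k * `|y| ^+ 2.
  move=> y Ky.
  have hinj : forall x, Kl x -> B x = 0 -> x = 0.
    move=> x Kx Bx0; have := hx x Kx; rewrite Bx0 subr0 => H.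
    have : `|x| ^+ 2 <= 0 by have := sqr_ge0 (`|x|); nra.
    have := sqr_ge0 (`|x|) => H1 H2.
    have : `|x| ^+ 2 = 0 by apply/eqP; rewrite eq_le H2 H1.
    by move/eqP; rewrite sqrf_eq0 normr_eq0 => /eqP.
  have [x [Kx <-]] := surj hBl hd0 hdl (fun x _ => hB.1 x) hinj Ky.
  have P := proj_pyth h hB x.
  have H := hx x Kx.
  have Hb := proj_best h hSl hA (B x) Kx.
  rewrite (distrC (B x) x) in Hb.
  have : (1 - d ^+ 2) * `|x| ^+ 2 <= `|B x| ^+ 2 by rewrite mulrBl mul1r; lra.
  rewrite mulrC -ler_pdivlMr // => H2.
  apply: (le_trans Hb); apply: (le_trans H).
  rewrite /k -mulrA; apply: ler_wpM2l; first exact: sqr_ge0.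
  by rewrite mulrC.
have -> : A z - B z = A (z - B z) - (B z - A (B z)).
  by rewrite (linB hAl) opprB addrA subrK.
rewrite (normB2 h) (ipC h) (hA.2 (B z) _ (hA.1 _)) mulr0 subr0.
have Pz := proj_pyth h hB z.
have Sb := stepB (B z) (hB.1 z).
rewrite Pz.
have := sqr_ge0 `|z - B z|; nra.
Qed.

Lemma lin_pert (R : realType) (V : completeNormedModType R) (H w : V -> V) l :
  lin_op H -> lin_op w -> lin_op (pert H w l).
Proof.
move=> hH hw a x y; rewrite /pert hH hw scalerDr !scalerA (mulrC l a) -scalerA.
by rewrite scalerDr addrACA.
Qed.

Lemma part1 (R : realType) (V : completeNormedModType R)
  (ip : V -> V -> R) (H0 G : V -> V) :
  inner_product_of_norm ip ->
  bounded_op H0 -> opnorm H0 = 1 ->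
  bounded_op G -> refl_ginv H0 G ->
  forall (w : V -> V) (l : R) (P0 Pl : V -> V),
     bounded_op w -> opnorm w = 1 ->
     0 <= l -> l < 1 / (2 * (opnorm H0 * opnorm G)) ->
     same_dim (Ker (pert H0 w l)) (Ker H0) ->
     orth_proj ip (Ker H0) P0 -> orth_proj ip (Ker (pert H0 w l)) Pl ->
     opnorm (fun x => Pl x - P0 x) <= l * (opnorm H0 * opnorm G) /
        Num.sqrt (1 - 2 * l * (opnorm H0 * opnorm G)).
Proof.
move=> h hH0 nH0 hG [_ hGH] w l P0 Pl hw nw l0 lk [n [dl d0]] hP0 hPl.
rewrite nH0 !mul1r in lk *.
set g := opnorm G in lk *.
have g0 : 0 <= g := opnorm_ge0 hG.
have gp : 0 < g.
  rewrite lt_def g0 andbT; apply/negP => /eqP g0'.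
  by move: lk; rewrite g0' mulr0 invr0 => /(le_lt_trans l0); rewrite ltxx.
set t := l * g.
have t0 : 0 <= t by rewrite mulr_ge0.
have t2 : t < 1 / 2.
  have : l * (2 * g) < 1 by rewrite -ltr_pdivlMr ?mulr_gt0 // div1r.
  rewrite /t ltr_pdivlMr // (_ : l * g * 2 = l * (2 * g)) //; ring.
have hS0 := Ker_subsp hH0.1.
have hSl := Ker_subsp (lin_pert l hH0.1 hw.1).
have hx : forall x, Ker (pert H0 w l) x -> `|x - P0 x| ^+ 2 <= t ^+ 2 * `|x| ^+ 2.
  move=> x; rewrite /Ker /pert /= => Hx.
  have K : Ker H0 (x - G (H0 x)).
    by rewrite /Ker /= (linB hH0.1) hGH subrr.
  apply: (le_trans (proj_best h hS0 hP0 x K)).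
  rewrite opprB addrC subrK -exprMn.
  rewrite ler_sqr ?nnegrE ?mulr_ge0 ?normr_ge0 //.
  apply: (le_trans (opnorm_bound hG _)); rewrite /t (mulrC l) -mulrA ler_wpM2l //.
  have -> : H0 x = - (l *: w x) by apply/eqP; rewrite -addr_eq0 Hx.
  rewrite normrN normrZ ger0_norm //; apply: ler_wpM2l => //.
  by have := opnorm_bound hw x; rewrite nw mul1r.
have K := key_est h hS0 hSl d0 dl hP0 hPl t0 _ hx.
have t1 : t < 1 by apply: (lt_le_trans t2); rewrite ler_pdivrMr // mul1r ler1n.
have c0 : 0 < 1 - 2 * t by rewrite subr_gt0 -ltr_pdivlMl // mulrC.
have {}K := K t1.
apply: ge_sup; first by exists (`|Pl 0 - P0 0|), 0 => //=; rewrite normr0.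
move=> _ [x /= hx1 <-].
rewrite -ler_sqr ?nnegrE ?normr_ge0 ?divr_ge0 ?sqrtr_ge0 //.
rewrite expr_div_n -mulrA sqr_sqrtr; last exact: ltW c0.
apply: (le_trans (K x)).
have tt : 0 < 1 - t ^+ 2 by rewrite subr_gt0 expr_lt1.
have -> : t ^+ 2 / (1 - 2 * t) = t ^+ 2 / (1 - t ^+ 2) * ((1 - t ^+ 2) / (1 - 2 * t)).
  by field; rewrite ?gt_eqF.
apply: ler_pM; first by rewrite divr_ge0 ?sqr_ge0 ?ltW.
- by rewrite sqr_ge0.
- by [].
have hx2 : `|x| ^+ 2 <= 1.
  by rewrite expr_le1 ?normr_ge0.
apply: (le_trans hx2).
rewrite ler_pdivlMr // mul1r; nra.
Qed.
Lemma atan_le (R : realType) (y : R) : 0 <= y -> atan y <= y.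
Proof.
rewrite le_eqVlt => /predU1P[<-|y0]; first by rewrite atan0.
have datan z : z \in `]0, y[ -> is_derive z 1 atan (1 + z ^+ 2)^-1.
  by move=> _; exact: is_derive1_atan.
have catan : {within `[0, y], continuous atan}.
  by apply: derivable_within_continuous => z _; exact: ex_derive.
have [c _ E] := MVT y0 datan catan.
move: E; rewrite atan0 subr0 subr0 => ->.
rewrite ler_pdivrMl ?ltr_wpDr ?sqr_ge0 //; have := sqr_ge0 c; nra.
Qed.

Lemma asin_le (R : realType) (s : R) : 0 <= s -> s < 1 ->
  asin s <= s / Num.sqrt (1 - s ^+ 2).
Proof.
move=> s0 s1.
have sI : -1 <= s <= 1 by rewrite (le_trans _ s0) ?lerN10 // ltW.
have th1 : asin s \in `](- (pi / 2)), (pi / 2)[.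
  rewrite in_itv /= asin_ltpi2 ?andbT; last by rewrite (le_trans _ s0) ?lerN10.
  by rewrite asin_gtNpi2 // (lt_le_trans _ s0) ?ltrN10 // ltW.
rewrite -(tanK th1) /tan asinK; last by rewrite in_itv.
rewrite cos_asin //; apply: atan_le; rewrite divr_ge0 // sqrtr_ge0 //.
Qed.

Lemma num_bound (R : realType) (k eps l s : R) : 0 < k -> 0 < eps -> 0 < l ->
  l * k <= 1 / 4 -> 3 * (l * k) * (k + eps) ^+ 2 <= 2 * k * eps + eps ^+ 2 ->
  0 <= s -> s <= l * k / Num.sqrt (1 - 2 * l * k) ->
  asin s / l <= k + eps.
Proof.
move=> k0 e0 l0 t4 hd s0 hs.
set t := l * k in t4 hd hs.
have t0 : 0 <= t by rewrite /t mulr_ge0 // ltW.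
have c0 : 1 / 2 <= 1 - 2 * t by lra.
have cp : 0 < 1 - 2 * t by lra.
have E2 : 2 * l * k = 2 * t by rewrite /t mulrA.
rewrite E2 in hs.
have hs2 : s ^+ 2 * (1 - 2 * t) <= t ^+ 2.
  have H : s ^+ 2 <= t ^+ 2 / (1 - 2 * t).
    move: hs; rewrite -ler_sqr ?nnegrE ?divr_ge0 ?sqrtr_ge0 //.
    rewrite expr_div_n sqr_sqrtr //; exact: ltW.
  by rewrite -ler_pdivlMr.
have s1 : s < 1.
  have : s ^+ 2 <= 1 / 8.
    have : s ^+ 2 / 2 <= t ^+ 2.
      apply: le_trans hs2; apply: ler_wpM2l; [exact: sqr_ge0|lra].
    have : t ^+ 2 <= 1 / 16 by rewrite expr2; nra.
    lra.
  nra.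
have hsq : 0 < 1 - s ^+ 2 by rewrite subr_gt0 expr_lt1.
set L := l ^+ 2 * (k + eps) ^+ 2.
have L0 : 0 <= L by rewrite /L mulr_ge0 ?sqr_ge0.
have hk : k ^+ 2 <= (k + eps) ^+ 2 * (1 - 2 * t - t ^+ 2).
  have tt : 0 <= t - t ^+ 2 by rewrite expr2; nra.
  have := mulr_ge0 tt (sqr_ge0 (k + eps)).
  have E : 2 * k * eps + eps ^+ 2 = (k + eps) ^+ 2 - k ^+ 2 by ring.
  rewrite E in hd.
  nra.
have hT : t ^+ 2 * (1 + L) <= L * (1 - 2 * t).
  have : l ^+ 2 * k ^+ 2 <= l ^+ 2 * ((k + eps) ^+ 2 * (1 - 2 * t - t ^+ 2)).
    by rewrite ler_wpM2l ?sqr_ge0.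
  rewrite /L /t; rewrite /t in hk.
  move=> H; rewrite exprMn; move: H.
  set a := l ^+ 2; set b := k ^+ 2; set c := (k + eps) ^+ 2; set u := l * k.
  move=> H; have : a * b + u ^+ 2 * (a * c) <= a * c * (1 - 2 * u).
    by move: H; rewrite -exprMn /a /b /u; nra.
  by rewrite -exprMn /a /b /u; nra.
have hS : s ^+ 2 * (1 + L) <= L.
  have : s ^+ 2 * (1 - 2 * t) * (1 + L) <= t ^+ 2 * (1 + L).
    by rewrite ler_wpM2r // addr_ge0.
  move=> H; have : s ^+ 2 * (1 + L) * (1 - 2 * t) <= L * (1 - 2 * t).
    by apply: le_trans hT; rewrite mulrAC.
  by rewrite ler_pM2r.
rewrite ler_pdivrMr //.
apply: (le_trans (asin_le s0 s1)).
have n1 : 0 <= s / Num.sqrt (1 - s ^+ 2) by rewrite divr_ge0 ?sqrtr_ge0.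
have n2 : 0 <= (k + eps) * l by rewrite mulr_ge0 // ltW // addr_gt0.
rewrite -ler_sqr ?nnegrE //.
rewrite expr_div_n sqr_sqrtr; last exact: ltW.
rewrite ler_pdivrMr // exprMn mulrC -/L.
rewrite (mulrC ((k + eps) ^+ 2)) -/L; nra.
Qed.

Lemma opnorm0 (R : realType) (V : completeNormedModType R) (f : V -> V) :
  (forall x, f x = 0) -> opnorm f = 0.
Proof.
move=> hf; rewrite /opnorm.
have -> : [set `|f x| | x in [set x : V | `|x| <= 1]] = [set 0].
  apply/seteqP; split => [_ [x _ <-]|_ ->] /=; first by rewrite hf normr0.
  by exists 0; rewrite /= ?hf normr0.
by rewrite sup1.
Qed.

Lemma opnorm_ge0' (R : realType) (V : completeNormedModType R) (f : V -> V) :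
  0 <= opnorm f.
Proof.
rewrite /opnorm.
case: (pselect (has_ubound [set `|f x| | x in [set x : V | `|x| <= 1]])) => hub.
  have H1 : `|f 0| <= opnorm f.
    by apply: (ub_le_sup hub); exists 0 => //=; rewrite normr0.
  exact: le_trans H1.
by rewrite sup_out // => -[].
Qed.

Lemma asin0' (R : realType) : asin 0 = 0 :> R.
Proof.
have hp : 0 <= pi / 2 :> R by rewrite divr_ge0 // pi_ge0.
by rewrite -{1}sin0 sinK // in_itv /= oppr_le0 hp.
Qed.

Lemma theta0 (R : realType) (V : completeNormedModType R) (Pf : R -> V -> V) :
  theta_max Pf 0 = 0.
Proof. by rewrite /theta_max opnorm0 ?asin0' // => x; rewrite subrr. Qed.

Lemma part2 (R : realType) (V : completeNormedModType R) (H0 w : V -> V)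
  (k : R) (Pf : R -> V -> V) : 0 < k ->
  (forall l, 0 <= l -> l < 1 / (2 * k) -> same_dim (Ker (pert H0 w l)) (Ker H0) ->
     opnorm (fun x => Pf l x - Pf 0 x) <= l * k / Num.sqrt (1 - 2 * l * k)) ->
  (\forall l \near 0^'+, same_dim (Ker (pert H0 w l)) (Ker H0)) ->
  (forall eps : R, 0 < eps ->
        \forall l \near 0^'+, theta_max Pf l / l <= k + eps) /\
  (forall X : R,
        (fun l => (theta_max Pf l - theta_max Pf 0) / l) @ 0^'+ --> X ->
        X <= k).
Proof.
move=> kp hb hsd.
have A : forall eps : R, 0 < eps ->
    \forall l \near 0^'+, theta_max Pf l / l <= k + eps.
  move=> eps e0.
  have d2p : 0 < eps * (2 * k + eps) / (3 * k * (k + eps) ^+ 2).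
    have ke : 0 < k + eps by rewrite addr_gt0.
    have k2 : 0 < 2 * k + eps by rewrite addr_gt0 // mulr_gt0.
    have ke2 : 0 < (k + eps) ^+ 2 by apply: exprn_gt0.
    by rewrite divr_gt0 // mulr_gt0 // mulr_gt0.
  have d4p : 0 < 1 / (4 * k) by rewrite divr_gt0 // mulr_gt0.
  near=> l.
  have l0 : 0 < l by near: l; exact: nbhs_right_gt.
  have l4 : l < 1 / (4 * k) by near: l; exact: nbhs_right_lt.
  have ld : l < eps * (2 * k + eps) / (3 * k * (k + eps) ^+ 2).
    by near: l; exact: nbhs_right_lt.
  have sd : same_dim (Ker (pert H0 w l)) (Ker H0) by near: l; exact: hsd.
  have lk4 : l * k <= 1 / 4.
    move: l4; rewrite ltr_pdivlMr ?mulr_gt0 // => H.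
    rewrite ler_pdivlMr //; apply: ltW; move: H.
    by rewrite (_ : l * (4 * k) = l * k * 4) //; ring.
  have lk2 : l < 1 / (2 * k).
    apply: (lt_le_trans l4); rewrite !div1r lef_pV2 ?posrE ?mulr_gt0 //.
    by rewrite ler_pM2r //; lra.
  apply: (num_bound kp e0 l0 lk4 _ (opnorm_ge0' _) (hb l (ltW l0) lk2 sd)).
  have ke2 : 0 < 3 * k * (k + eps) ^+ 2.
    by apply: mulr_gt0; [apply: mulr_gt0|apply: exprn_gt0; rewrite addr_gt0].
  move: ld; rewrite ltr_pdivlMr // => H.
  apply: ltW; move: H.
  rewrite (_ : 3 * (l * k) * (k + eps) ^+ 2 = l * (3 * k * (k + eps) ^+ 2)); last by ring.
  by rewrite (_ : 2 * k * eps + eps ^+ 2 = eps * (2 * k + eps)) //; ring.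
split => // X hX.
apply/ler_addgt0Pr => eps e0.
apply: (cvgr_to_le hX).
apply: filterS (A eps e0) => l; by rewrite theta0 subr0.
Unshelve. all: by end_near.
Qed.

Theorem mainTheorem15 (R : realType) (V : completeNormedModType R)
  (ip : V -> V -> R) (H0 G : V -> V) :
  inner_product_of_norm ip ->
  bounded_op H0 -> opnorm H0 = 1 -> finite_dim (Ker H0) ->
  bounded_op G -> refl_ginv H0 G ->
  let kappa := opnorm H0 * opnorm G in
  (* main estimate *)
  (forall (w : V -> V) (l : R) (P0 Pl : V -> V),
     bounded_op w -> opnorm w = 1 ->
     0 <= l -> l < 1 / (2 * kappa) ->
     same_dim (Ker (pert H0 w l)) (Ker H0) ->
     orth_proj ip (Ker H0) P0 -> orth_proj ip (Ker (pert H0 w l)) Pl ->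
     opnorm (fun x => Pl x - P0 x) <= l * kappa / Num.sqrt (1 - 2 * l * kappa))
  /\
  (* limsup_{l -> 0+} theta_max(w,l)/l <= kappa, and X(w) <= kappa *)
  (forall (w : V -> V) (Pf : R -> V -> V),
     bounded_op w -> opnorm w = 1 ->
     (forall l, orth_proj ip (Ker (pert H0 w l)) (Pf l)) ->
     (\forall l \near 0^'+, same_dim (Ker (pert H0 w l)) (Ker H0)) ->
     (forall eps : R, 0 < eps ->
        \forall l \near 0^'+, theta_max Pf l / l <= kappa + eps) /\
     (forall X : R,
        (fun l => (theta_max Pf l - theta_max Pf 0) / l) @ 0^'+ --> X ->
        X <= kappa))
  /\
  (* X = sup over a symmetry class C of unit-norm perturbations of X(w) *)
  (forall (C : set (V -> V)) (Pf : (V -> V) -> R -> V -> V)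
          (Xw : (V -> V) -> R),
     (forall w, C w -> bounded_op w) ->
     (forall w, C w -> opnorm w = 1 ->
        (forall l, orth_proj ip (Ker (pert H0 w l)) (Pf w l)) /\
        (\forall l \near 0^'+, same_dim (Ker (pert H0 w l)) (Ker H0)) /\
        (fun l => (theta_max (Pf w) l - theta_max (Pf w) 0) / l) @ 0^'+ --> Xw w) ->
     sup [set Xw w | w in [set w | C w /\ opnorm w = 1]] <= kappa).
Proof.
move=> h hH0 nH0 _ hG hGi kappa.
have P1 := part1 h hH0 nH0 hG hGi.
have kE : kappa = opnorm G by rewrite /kappa nH0 mul1r.
have kp : 0 < kappa.
  rewrite kE lt_def opnorm_ge0 // andbT; apply/negP => /eqP g0.
  have : opnorm H0 = 0.
    apply: opnorm0 => x.
    have := opnorm_bound hG (H0 x); rewrite g0 mul0r => H.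
    have E : G (H0 x) = 0 by apply/eqP; rewrite -normr_eq0 eq_le H normr_ge0.
    by rewrite -hGi.2 E (lin0 hH0.1).
  by rewrite nH0 => /eqP; rewrite oner_eq0.
have pert0 : forall w, pert H0 w 0 = H0.
  by move=> w; apply/funext => x; rewrite /pert scale0r addr0.
have P2 : forall (w : V -> V) (Pf : R -> V -> V),
     bounded_op w -> opnorm w = 1 ->
     (forall l, orth_proj ip (Ker (pert H0 w l)) (Pf l)) ->
     (\forall l \near 0^'+, same_dim (Ker (pert H0 w l)) (Ker H0)) ->
     (forall eps : R, 0 < eps ->
        \forall l \near 0^'+, theta_max Pf l / l <= kappa + eps) /\
     (forall X : R,
        (fun l => (theta_max Pf l - theta_max Pf 0) / l) @ 0^'+ --> X ->
        X <= kappa).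
  move=> w Pf hw nw hPf hsd.
  apply: (part2 kp _ hsd) => l l0 lk sd.
  have hP0 := hPf 0; rewrite pert0 in hP0.
  exact: P1 w l (Pf 0) (Pf l) hw nw l0 lk sd hP0 (hPf l).
split; first exact: P1.
split; first exact: P2.
move=> C Pf Xw hC hCw.
case: (pselect (exists w, C w /\ opnorm w = 1)) => [[w0 [Cw0 nw0]]|no].
  apply: ge_sup; first by exists (Xw w0), w0.
  move=> y [w [Cw nw] <-].
  have [H1 [H2 H3]] := hCw w Cw nw.
  exact: (P2 w (Pf w) (hC w Cw) nw H1 H2).2 _ H3.
have -> : [set Xw w | w in [set w | C w /\ opnorm w = 1]] = set0.
  by apply/seteqP; split => // y [w hw _]; exfalso; apply: no; exists w.
by rewrite sup0 ltW.
Qed.
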